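(* Assume the normalization $\sigma_j=e$, $\eta_j=i\infty$ and $\begin{pmatrix}1&1\\0&1\end{pmatrix}\in\Gamma$, and let $\kappa>0$. Let $p=\Gamma\begin{pmatrix}a&b\\c&d\end{pmatrix}\in\Gamma\backslash\mathrm{PSL}(2,\mathbb R)$ with $c\neq0$. Then $p\notin S_{j,\kappa}$ if and only if $a/c\notin S_\kappa$.
   Context: $G=\mathrm{PSL}(2,\mathbb R)$ acts linearly on $\mathbb R^2/\pm$; $\Gamma<G$ is a non-uniform lattice, one of whose cusps $\eta_j$ is at $i\infty$ with $\sigma_j=e$; $N=\{\begin{pmatrix}1&t\\0&1\end{pmatrix}\}$, $e_1=(1,0)^T$, $\Gamma_j=\Gamma\cap N$, $\pi_j:\Gamma_j\backslash G\to\Gamma\backslash G$ the projection, $m_j(\Gamma_jg)=g^{-1}e_1\in\mathbb R^2/\pm$. $S_{j,\kappa}$ is the set of $p\in\Gamma\backslash G$ for which there exist $\mu,\nu>0$ such that every $(a',b')^T\in m_j(\pi_j^{-1}(p))$ satisfies $|b'|\ge\mu$ or $|a'|^\kappa|b'|\ge\nu$. A real number $x$ is Diophantine of type $\kappa$ with respect to $\Gamma e_1$ if there is $\tilde C>0$ with $|\beta|^\kappa|x\beta-\alpha|\ge\tilde C$ for all $(\alpha,\beta)\in\Gamma e_1$ with $\beta\ne0$; $S_\kappa\subset\mathbb R$ denotes the set of such $x$. *)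

(* Defs.v *)
From Stdlib Require Import Reals.
Open Scope R_scope.

(* 2x2 real matrices; SL(2,R) = those of determinant 1, and
   PSL(2,R) = SL(2,R)/{+-I}.  A subgroup of PSL(2,R) is represented by its
   preimage in SL(2,R) (a predicate closed under g |-> -g). *)
Record M2 := mkM2 { m11 : R; m12 : R; m21 : R; m22 : R }.

Definition det (g : M2) : R := m11 g * m22 g - m12 g * m21 g.

Definition mmul (g h : M2) : M2 :=
  mkM2 (m11 g * m11 h + m12 g * m21 h) (m11 g * m12 h + m12 g * m22 h)
       (m21 g * m11 h + m22 g * m21 h) (m21 g * m12 h + m22 g * m22 h).

Definition minv (g : M2) : M2 := mkM2 (m22 g) (- m12 g) (- m21 g) (m11 g).

Definition mneg (g : M2) : M2 := mkM2 (- m11 g) (- m12 g) (- m21 g) (- m22 g).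

Definition I2 : M2 := mkM2 1 0 0 1.

Definition Tmat : M2 := mkM2 1 1 0 1.

Definition mapp (g : M2) (v : R * R) : R * R :=
  (m11 g * fst v + m12 g * snd v, m21 g * fst v + m22 g * snd v).

Definition vneg (v : R * R) : R * R := (- fst v, - snd v).

Definition e1 : R * R := (1, 0).

(* |x|^k for k > 0, with the convention 0^k = 0
   (Stdlib's Rpower is only meaningful for positive bases). *)
Definition abspow (x k : R) : R :=
  if Req_EM_T x 0 then 0 else Rpower (Rabs x) k.

Record DiscretePSL2 (Gam : M2 -> Prop) : Prop := {
  dg_det : forall g, Gam g -> det g = 1;
  dg_id : Gam I2;
  dg_mul : forall g h, Gam g -> Gam h -> Gam (mmul g h);
  dg_inv : forall g, Gam g -> Gam (minv g);
  dg_neg : forall g, Gam g -> Gam (mneg g);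
  dg_discrete : exists eps, 0 < eps /\
    forall g, Gam g ->
      Rabs (m11 g - 1) < eps -> Rabs (m12 g) < eps ->
      Rabs (m21 g) < eps -> Rabs (m22 g - 1) < eps -> g = I2
}.

(* v in m_j(pi_j^{-1}(Gamma g)) (as an element of R^2/+-, i.e. up to sign):
   the fibre pi_j^{-1}(Gamma g) consists of the cosets Gamma_j h with
   Gamma h = Gamma g, i.e. h g^{-1} in Gamma, and m_j(Gamma_j h) = h^{-1} e1. *)
Definition in_mj_fiber (Gam : M2 -> Prop) (g : M2) (v : R * R) : Prop :=
  exists h, det h = 1 /\ Gam (mmul h (minv g)) /\
    (v = mapp (minv h) e1 \/ v = vneg (mapp (minv h) e1)).

Definition S_jk (Gam : M2 -> Prop) (kappa : R) (g : M2) : Prop :=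
  exists mu nu, 0 < mu /\ 0 < nu /\
    forall v, in_mj_fiber Gam g v ->
      Rabs (snd v) >= mu \/ abspow (fst v) kappa * Rabs (snd v) >= nu.

(* x is Diophantine of type kappa w.r.t. Gamma e1, i.e. x in S_kappa *)
Definition S_k (Gam : M2 -> Prop) (kappa : R) (x : R) : Prop :=
  exists C, 0 < C /\
    forall gam, Gam gam ->
      let alpha := fst (mapp gam e1) in
      let beta := snd (mapp gam e1) in
      beta <> 0 -> abspow beta kappa * Rabs (x * beta - alpha) >= C.

(* Main.v *)
Require Import Defs.
From Stdlib Require Import Reals Lra Lia Psatz ZArith.
Open Scope R_scope.

Lemma div_le (x y z : R) : 0 < z -> y <= x * z -> y / z <= x.
Proof.
  intros hz h. replace x with ((x * z) * / z) by (field; lra).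
  unfold Rdiv. apply Rmult_le_compat_r; [left; apply Rinv_0_lt_compat; lra | lra].
Qed.

Lemma Rpower_pos (x k : R) : 0 < Rpower x k.
Proof. unfold Rpower. apply exp_pos. Qed.

Lemma abspow_nz (x k : R) : x <> 0 -> abspow x k = Rpower (Rabs x) k.
Proof. intros h. unfold abspow. destruct (Req_EM_T x 0); [contradiction|reflexivity]. Qed.

Lemma abspow_0 (k : R) : abspow 0 k = 0.
Proof. unfold abspow. destruct (Req_EM_T 0 0); [reflexivity|contradiction]. Qed.

Lemma abspow_abs (x y k : R) : Rabs x = Rabs y -> abspow x k = abspow y k.
Proof.
  intros h. destruct (Req_dec x 0) as [hx|hx].
  - subst. rewrite Rabs_R0 in h. assert (y = 0).
    { destruct (Req_dec y 0); auto. pose proof (Rabs_pos_lt y H). lra. }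
    subst; reflexivity.
  - assert (y <> 0). { intro; subst. rewrite Rabs_R0 in h. apply hx. destruct (Req_dec x 0) as [hh|hh]; auto. pose proof (Rabs_pos_lt x hh). lra. }
    rewrite !abspow_nz, h; auto.
Qed.

Lemma sq_abs (x : R) : x * x = Rabs x * Rabs x.
Proof. rewrite <- Rabs_mult. rewrite Rabs_right; nra. Qed.

Lemma mapp_e1 (g : M2) : mapp g e1 = (m11 g, m21 g).
Proof. unfold mapp, e1; simpl; f_equal; ring. Qed.

Definition Tn (r : R) : M2 := mkM2 1 r 0 1.

Lemma Tn_nat (Gam : M2 -> Prop) (HG : DiscretePSL2 Gam) (HT : Gam Tmat) :
  forall n : nat, Gam (Tn (INR n)).
Proof.
  induction n.
  - simpl. apply (dg_id _ HG).
  - replace (Tn (INR (S n))) with (mmul Tmat (Tn (INR n))).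
    + apply (dg_mul _ HG); auto.
    + rewrite S_INR. unfold mmul, Tmat, Tn; simpl; f_equal; ring.
Qed.

Lemma Tn_Z (Gam : M2 -> Prop) (HG : DiscretePSL2 Gam) (HT : Gam Tmat) :
  forall z : Z, Gam (Tn (IZR z)).
Proof.
  intros [|p|p].
  - apply (Tn_nat _ HG HT 0).
  - rewrite <- positive_nat_Z, <- INR_IZR_INZ. apply Tn_nat; auto.
  - replace (Tn (IZR (Z.neg p))) with (minv (Tn (IZR (Z.pos p)))).
    + apply (dg_inv _ HG). rewrite <- positive_nat_Z, <- INR_IZR_INZ. apply Tn_nat; auto.
    + unfold minv, Tn; simpl. f_equal; try ring.
Qed.

Lemma disc_sq (Gam : M2 -> Prop) (HG : DiscretePSL2 Gam) (HT : Gam Tmat) :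
  exists eps, 0 < eps /\ forall g, Gam g ->
    eps <= m11 g * m11 g \/ eps <= m21 g * m21 g.
Proof.
  destruct (dg_discrete _ HG) as [eps [heps Hd]].
  exists eps; split; auto. intros g hg.
  destruct (Rle_lt_dec eps (m11 g * m11 g)) as [h1|h1]; [left; auto|].
  destruct (Rle_lt_dec eps (m21 g * m21 g)) as [h2|h2]; [right; auto|].
  exfalso.
  pose proof (dg_det _ HG g hg) as hd.
  assert (hg' : Gam (mmul g (mmul Tmat (minv g)))).
  { apply (dg_mul _ HG); auto. apply (dg_mul _ HG); auto. apply (dg_inv _ HG); auto. }
  destruct g as [al p be q]. unfold det in hd; simpl in *.
  assert (E : mmul (mkM2 al p be q) (mmul Tmat (minv (mkM2 al p be q)))
              = mkM2 (1 - al*be) (al*al) (- (be*be)) (1 + al*be)).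
  { unfold mmul, Tmat, minv; simpl. f_equal; try lra; ring_simplify; lra. }
  rewrite E in hg'.
  pose proof (Hd _ hg') as Hd'. simpl in Hd'.
  assert (I : mkM2 (1 - al*be) (al*al) (- (be*be)) (1 + al*be) = I2).
  { apply Hd'; apply Rabs_def1; nra. }
  unfold I2 in I. injection I as q1 q2 q3 q4. assert (al = 0) by nra. assert (be = 0) by nra. subst. lra.
Qed.

Lemma disc_abs (Gam : M2 -> Prop) (HG : DiscretePSL2 Gam) (HT : Gam Tmat) :
  exists eps, 0 < eps <= 1 /\ forall g, Gam g ->
    eps <= Rabs (m11 g) \/ eps <= Rabs (m21 g).
Proof.
  destruct (disc_sq _ HG HT) as [e [he H]].
  exists (Rmin e 1). split. { split; [apply Rmin_glb_lt; lra| apply Rmin_r]. }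
  intros g hg. pose proof (Rmin_l e 1). pose proof (Rmin_r e 1).
  pose proof (Rabs_pos (m11 g)). pose proof (Rabs_pos (m21 g)).
  destruct (H g hg) as [h|h]; rewrite sq_abs in h.
  - left. destruct (Rle_lt_dec (Rmin e 1) (Rabs (m11 g))); auto. nra.
  - right. destruct (Rle_lt_dec (Rmin e 1) (Rabs (m21 g))); auto. nra.
Qed.

Lemma fiber_mk (Gam : M2 -> Prop) (HG : DiscretePSL2 Gam) (a b c d : R)
  (hdet : a * d - b * c = 1) (g0 : M2) : Gam g0 ->
  in_mj_fiber Gam (mkM2 a b c d)
    (d * m11 g0 - b * m21 g0, a * m21 g0 - c * m11 g0).
Proof.
  intros hg. pose proof (dg_det _ HG g0 hg) as hd.
  pose proof (dg_inv _ HG g0 hg) as hi.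
  exists (mmul (minv g0) (mkM2 a b c d)).
  destruct g0 as [al p be q]; unfold det in *; simpl in *.
  split; [|split].
  - simpl. nra.
  - replace (mmul (mmul (minv (mkM2 al p be q)) (mkM2 a b c d)) (minv (mkM2 a b c d)))
      with (minv (mkM2 al p be q)); auto.
    assert (F1 : al * (a*d - b*c) = al) by (rewrite hdet; ring).
    assert (F2 : p * (a*d - b*c) = p) by (rewrite hdet; ring).
    assert (F3 : be * (a*d - b*c) = be) by (rewrite hdet; ring).
    assert (F4 : q * (a*d - b*c) = q) by (rewrite hdet; ring).
    unfold mmul, minv; simpl. f_equal; lra.
  - left. unfold mapp, minv, mmul, e1; simpl. f_equal; ring.
Qed.

Lemma fiber_dest (Gam : M2 -> Prop) (HG : DiscretePSL2 Gam) (a b c d : R)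
  (hdet : a * d - b * c = 1) (v : R * R) :
  in_mj_fiber Gam (mkM2 a b c d) v ->
  exists g0, Gam g0 /\ Rabs (fst v) = Rabs (d * m11 g0 - b * m21 g0) /\
    Rabs (snd v) = Rabs (a * m21 g0 - c * m11 g0).
Proof.
  intros [h [hd [hg hv]]].
  exists (minv (mmul h (minv (mkM2 a b c d)))).
  split; [apply (dg_inv _ HG); auto|].
  destruct h as [h1 h2 h3 h4]; simpl in *.
  assert (F3 : h3 * (a*d - b*c) = h3) by (rewrite hdet; ring).
  assert (F4 : h4 * (a*d - b*c) = h4) by (rewrite hdet; ring).
  assert (E1 : d * (h4 * a + - h3 * b) - b * - (h3 * d + h4 * - c) = h4) by lra.
  assert (E2 : a * - (h3 * d + h4 * - c) - c * (h4 * a + - h3 * b) = - h3) by lra.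
  unfold mapp, vneg, e1 in hv; simpl in hv.
  destruct hv as [hv|hv]; subst v; simpl.
  - split; f_equal; lra.
  - split; rewrite Rabs_Ropp; f_equal; lra.
Qed.

Lemma dir1 (Gam : M2 -> Prop) (HG : DiscretePSL2 Gam) (HT : Gam Tmat)
  (kappa : R) (hk : 0 < kappa) (a b c d : R) (hdet : a * d - b * c = 1)
  (hc : c <> 0) :
  S_k Gam kappa (a / c) -> S_jk Gam kappa (mkM2 a b c d).
Proof.
  intros [C [hC HC]].
  destruct (disc_abs _ HG HT) as [eps [heps Hd]].
  pose proof (Rabs_pos a). pose proof (Rabs_pos b). pose proof (Rabs_pos d).
  pose proof (Rabs_pos_lt c hc) as hcp.
  set (M := Rabs a + Rabs b + Rabs c + Rabs d + 1).
  assert (hM : 1 <= M) by (unfold M; lra).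
  set (eta := eps / (2 * M)).
  set (mu := eta * Rabs c / M).
  set (P := Rpower (Rabs c + Rabs d) kappa).
  assert (hP : 0 < P) by apply Rpower_pos.
  assert (heta : eta * (2 * M) = eps) by (unfold eta; field; lra).
  assert (hmu : mu * M = eta * Rabs c) by (unfold mu; field; lra).
  assert (heta0 : 0 < eta) by (unfold eta; apply Rdiv_lt_0_compat; lra).
  assert (hmu0 : 0 < mu) by (unfold mu; apply Rdiv_lt_0_compat; nra).
  assert (hmueta : mu <= eta) by (unfold M in hmu; nra).
  assert (hee : eta <= eps) by nra.
  assert (hm1 : mu <= eta * Rabs c) by nra.
  assert (hmuc : mu <= Rabs c * eps) by nra.
  exists mu, (Rabs c * C / P). split; [auto|split].
  { unfold Rdiv. apply Rmult_lt_0_compat; [nra|apply Rinv_0_lt_compat; auto]. }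
  intros v hv.
  destruct (fiber_dest _ HG a b c d hdet v hv) as [g0 [hg [hf hs]]].
  set (al := m11 g0) in *. set (be := m21 g0) in *.
  set (a' := d * al - b * be) in *. set (b' := a * be - c * al) in *.
  assert (F1 : al * (a*d - b*c) = al) by (rewrite hdet; ring).
  assert (F2 : be * (a*d - b*c) = be) by (rewrite hdet; ring).
  assert (Eal : al = a * a' + b * b') by (unfold a', b'; lra).
  assert (Ebe : be = c * a' + d * b') by (unfold a', b'; lra).
  rewrite hs, (abspow_abs (fst v) a' kappa hf).
  destruct (Rle_lt_dec mu (Rabs b')) as [hb|hb]; [left; lra|right].
  destruct (Req_dec be 0) as [hb0|hb0].
  - exfalso.
    destruct (Hd g0 hg) as [h|h]; fold al be in h.
    + assert (Rabs b' = Rabs c * Rabs al).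
      { rewrite <- Rabs_mult. unfold b'. rewrite hb0.
        rewrite <- Rabs_Ropp. f_equal. ring. }
      nra.
    + rewrite hb0, Rabs_R0 in h. lra.
  - pose proof (HC g0 hg) as HC'. rewrite mapp_e1 in HC'. simpl in HC'.
    specialize (HC' hb0). fold al be in HC'.
    set (t := Rabs (a / c * be - al)) in *.
    assert (Hb' : Rabs b' = Rabs c * t).
    { unfold t. rewrite <- Rabs_mult. f_equal. unfold b'. field. auto. }
    assert (Ha' : eta <= Rabs a').
    { destruct (Rle_lt_dec eta (Rabs a')) as [h|h]; auto. exfalso.
      assert (B1 : Rabs al <= Rabs a * Rabs a' + Rabs b * Rabs b').
      { rewrite Eal, <- !Rabs_mult. apply Rabs_triang. }
      assert (B2 : Rabs be <= Rabs c * Rabs a' + Rabs d * Rabs b').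
      { rewrite Ebe, <- !Rabs_mult. apply Rabs_triang. }
      pose proof (Rabs_pos a'). pose proof (Rabs_pos b').
      assert (Rabs al < eps) by (unfold M in heta; nra).
      assert (Rabs be < eps) by (unfold M in heta; nra).
      destruct (Hd g0 hg) as [h'|h']; fold al be in h'; lra. }
    assert (ha0 : a' <> 0).
    { intro h0. rewrite h0, Rabs_R0 in Ha'. lra. }
    rewrite abspow_nz by auto. rewrite abspow_nz in HC' by auto.
    assert (B2 : Rabs be <= (Rabs c + Rabs d) * Rabs a').
    { assert (Rabs be <= Rabs c * Rabs a' + Rabs d * Rabs b').
      { rewrite Ebe, <- !Rabs_mult. apply Rabs_triang. }
      pose proof (Rabs_pos b'). nra. }
    assert (Pb : Rpower (Rabs be) kappa <= P * Rpower (Rabs a') kappa).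
    { unfold P. rewrite Rpower_mult_distr by (try apply Rabs_pos_lt; auto; nra).
      apply Rle_Rpower_l; [lra|]. split; auto. apply Rabs_pos_lt; auto. }
    apply Rle_ge. apply div_le; auto.
    pose proof (Rpower_pos (Rabs be) kappa). pose proof (Rpower_pos (Rabs a') kappa).
    assert (0 <= t) by apply Rabs_pos.
    rewrite Hb'.
    assert (Rabs c * C <= Rabs c * (Rpower (Rabs be) kappa * t)) by nra.
    assert (Rabs c * (Rpower (Rabs be) kappa * t) <= Rabs c * ((P * Rpower (Rabs a') kappa) * t)).
    { apply Rmult_le_compat_l; [lra|]. apply Rmult_le_compat_r; lra. }
    lra.
Qed.

Lemma dir2 (Gam : M2 -> Prop) (HG : DiscretePSL2 Gam) (HT : Gam Tmat)
  (kappa : R) (hk : 0 < kappa) (a b c d : R) (hdet : a * d - b * c = 1)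
  (hc : c <> 0) :
  S_jk Gam kappa (mkM2 a b c d) -> S_k Gam kappa (a / c).
Proof.
  intros [mu [nu [hmu [hnu H]]]].
  pose proof (Rabs_pos d) as hd0.
  pose proof (Rabs_pos_lt c hc) as hcp.
  assert (HH : forall g0, Gam g0 ->
    Rabs (a * m21 g0 - c * m11 g0) >= mu \/
    abspow (d * m11 g0 - b * m21 g0) kappa * Rabs (a * m21 g0 - c * m11 g0) >= nu).
  { intros g0 hg. apply (H _ (fiber_mk _ HG a b c d hdet g0 hg)). }
  assert (Ha : forall al be, Rabs c * Rabs (d * al - b * be) <=
                 Rabs be + Rabs d * Rabs (a * be - c * al)).
  { intros al be. rewrite <- !Rabs_mult.
    replace (c * (d * al - b * be)) with (be + (- (d * (a * be - c * al)))).
    - eapply Rle_trans; [apply Rabs_triang|]. rewrite Rabs_Ropp, Rabs_mult. lra.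
    - assert (F : be * (a*d - b*c) = be) by (rewrite hdet; ring). lra. }
  set (A := (1 + Rabs d * mu) / Rabs c).
  assert (hA : Rabs c * A = 1 + Rabs d * mu) by (unfold A; field; lra).
  assert (hA0 : 0 < A) by (unfold A; apply Rdiv_lt_0_compat; nra).
  set (PA := Rpower A kappa).
  assert (hPA : 0 < PA) by apply Rpower_pos.
  set (rho := nu / PA).
  assert (hrho : rho * PA = nu) by (unfold rho; field; lra).
  assert (hrho0 : 0 < rho) by (unfold rho; apply Rdiv_lt_0_compat; lra).
  set (lam := Rmin mu rho).
  assert (hlam0 : 0 < lam) by (apply Rmin_glb_lt; lra).
  pose proof (Rmin_l mu rho). pose proof (Rmin_r mu rho). fold lam in H0, H1.
  assert (step : forall g0, Gam g0 -> Rabs (m21 g0) <= 1 ->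
            lam <= Rabs (a * m21 g0 - c * m11 g0)).
  { intros g0 hg hb1.
    destruct (Rle_lt_dec mu (Rabs (a * m21 g0 - c * m11 g0))) as [h|h]; [lra|].
    destruct (HH g0 hg) as [h'|h']; [lra|].
    set (a' := d * m11 g0 - b * m21 g0) in *.
    set (b' := a * m21 g0 - c * m11 g0) in *.
    assert (ha0 : a' <> 0).
    { intro h0. rewrite h0, abspow_0 in h'. lra. }
    rewrite abspow_nz in h' by auto.
    pose proof (Ha (m11 g0) (m21 g0)) as Ha'. fold a' b' in Ha'.
    pose proof (Rabs_pos b').
    assert (Rabs a' <= A).
    { assert (Rabs c * Rabs a' <= Rabs c * A) by nra. nra. }
    assert (Rpower (Rabs a') kappa <= PA).
    { apply Rle_Rpower_l; [lra|]. split; auto. apply Rabs_pos_lt; auto. }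
    assert (nu <= PA * Rabs b') by nra.
    nra. }
  set (beta0 := Rmin 1 (lam / Rabs c)).
  assert (hb00 : 0 < beta0).
  { apply Rmin_glb_lt; [lra|]. apply Rdiv_lt_0_compat; lra. }
  assert (blb : forall g0, Gam g0 -> m21 g0 <> 0 -> beta0 <= Rabs (m21 g0)).
  { intros g0 hg hb0.
    destruct (Rle_lt_dec (Rabs (m21 g0)) 1) as [hb1|hb1];
      [|pose proof (Rmin_l 1 (lam / Rabs c)) as hm; fold beta0 in hm; lra].
    set (al := m11 g0) in *. set (be := m21 g0) in *.
    set (b' := a * be - c * al).
    set (r := b' / (c * be)).
    set (n := Int_part r).
    destruct (base_Int_part r) as [hn1 hn2]. fold n in hn1, hn2.
    assert (hg1 : Gam (mmul (Tn (IZR n)) g0)).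
    { apply (dg_mul _ HG); auto. apply Tn_Z; auto. }
    pose proof (step _ hg1) as st. unfold Tn, mmul in st; simpl in st.
    fold al be in st.
    replace (0 * al + 1 * be) with be in st by ring.
    specialize (st hb1).
    replace (a * be - c * (1 * al + IZR n * be)) with ((c * be) * (r - IZR n)) in st.
    2:{ unfold r, b'. field. auto. }
    rewrite Rabs_mult, (Rabs_right (r - IZR n)) in st by lra.
    rewrite Rabs_mult in st.
    pose proof (Rabs_pos_lt be hb0).
    assert (lam < Rabs c * Rabs be) by nra.
    assert (lam / Rabs c < Rabs be).
    { apply (Rmult_lt_reg_l (Rabs c)); [lra|].
      replace (Rabs c * (lam / Rabs c)) with lam by (field; lra). lra. }
    pose proof (Rmin_r 1 (lam / Rabs c)) as hm; fold beta0 in hm. lra. }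
  set (Q := Rpower beta0 kappa).
  assert (hQ : 0 < Q) by apply Rpower_pos.
  set (L := (1 + Rabs d * mu / beta0) / Rabs c).
  assert (hL : Rabs c * L * beta0 = beta0 + Rabs d * mu) by (unfold L; field; lra).
  assert (hL0 : 0 < L) by (unfold L; apply Rdiv_lt_0_compat; [|lra];
     assert (0 <= Rabs d * mu / beta0) by (apply Rmult_le_pos; [nra|left; apply Rinv_0_lt_compat; lra]); lra).
  set (PL := Rpower L kappa).
  assert (hPL : 0 < PL) by apply Rpower_pos.
  exists (Rmin (Q * mu / Rabs c) (nu / (PL * Rabs c))).
  split.
  { apply Rmin_glb_lt; apply Rdiv_lt_0_compat; nra. }
  intros g0 hg. rewrite mapp_e1. cbv zeta. simpl. intros hb0.
  pose proof (blb g0 hg hb0) as hbb.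
  set (al := m11 g0) in *. set (be := m21 g0) in *.
  set (t := Rabs (a / c * be - al)).
  assert (ht : 0 <= t) by apply Rabs_pos.
  assert (Hb' : Rabs (a * be - c * al) = Rabs c * t).
  { unfold t. rewrite <- Rabs_mult. f_equal. field. auto. }
  rewrite abspow_nz by auto.
  assert (hQb : Q <= Rpower (Rabs be) kappa).
  { apply Rle_Rpower_l; lra. }
  pose proof (Rmin_l (Q * mu / Rabs c) (nu / (PL * Rabs c))).
  pose proof (Rmin_r (Q * mu / Rabs c) (nu / (PL * Rabs c))).
  apply Rle_ge.
  destruct (Rle_lt_dec mu (Rabs (a * be - c * al))) as [h|h].
  - assert (Q * mu / Rabs c <= Rpower (Rabs be) kappa * t).
    { apply div_le; auto. rewrite Hb' in h. nra. }
    lra.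
  - destruct (HH g0 hg) as [h'|h']; fold al be in h'; [lra|].
    set (a' := d * al - b * be) in *.
    set (b' := a * be - c * al) in *.
    assert (ha0 : a' <> 0).
    { intro h0. rewrite h0, abspow_0 in h'. lra. }
    rewrite abspow_nz in h' by auto.
    pose proof (Ha al be) as Ha'. fold a' b' in Ha'.
    pose proof (Rabs_pos b').
    assert (hbe : 0 < Rabs be) by (apply Rabs_pos_lt; auto).
    assert (Rabs d * Rabs b' <= Rabs d * mu) by nra.
    assert (Rabs d * mu * beta0 <= Rabs d * mu * Rabs be).
    { apply Rmult_le_compat_l; [nra|auto]. }
    assert (Rabs c * Rabs a' <= Rabs be + Rabs d * mu) by lra.
    assert (Rabs c * Rabs a' * beta0 <= (Rabs be + Rabs d * mu) * beta0).
    { apply Rmult_le_compat_r; lra. }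
    assert (Rabs c * Rabs a' * beta0 <= Rabs c * (L * Rabs be) * beta0).
    { replace (Rabs c * (L * Rabs be) * beta0) with (Rabs be * (Rabs c * L * beta0)) by ring.
      rewrite hL. nra. }
    assert (Rabs a' <= L * Rabs be).
    { apply (Rmult_le_reg_r (Rabs c * beta0)); [nra|]. nra. }
    assert (Rpower (Rabs a') kappa <= PL * Rpower (Rabs be) kappa).
    { unfold PL. rewrite Rpower_mult_distr by auto.
      apply Rle_Rpower_l; [lra|]. split; auto. apply Rabs_pos_lt; auto. }
    pose proof (Rpower_pos (Rabs a') kappa).
    assert (hnu2 : nu <= PL * Rpower (Rabs be) kappa * Rabs b').
    { assert (Rpower (Rabs a') kappa * Rabs b' <= PL * Rpower (Rabs be) kappa * Rabs b').
      { apply Rmult_le_compat_r; auto. }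
      lra. }
    assert (nu / (PL * Rabs c) <= Rpower (Rabs be) kappa * t).
    { apply div_le; [nra|]. rewrite Hb' in hnu2. replace (Rpower (Rabs be) kappa * t * (PL * Rabs c)) with (PL * Rpower (Rabs be) kappa * (Rabs c * t)) by ring. exact hnu2. }
    lra.
Qed.

Theorem lemmaA6 (Gam : M2 -> Prop) (HG : DiscretePSL2 Gam) (HT : Gam Tmat)
  (kappa : R) (hk : 0 < kappa) (a b c d : R) (hdet : a * d - b * c = 1)
  (hc : c <> 0) :
  ~ S_jk Gam kappa (mkM2 a b c d) <-> ~ S_k Gam kappa (a / c).
Proof.
  split; intros h1 h2; apply h1.
  - eapply dir1; eauto.
  - eapply dir2; eauto.
Qed.
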